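(* Let $A\subseteq\Gamma$ be a finite set and $D\subseteq A-A$, and put $\sigma:=\sum_{s\in D}|A-A_s|$. Then there are $l\ge|D|^2/(4\sigma)$ elements $s_1,\dots,s_l\in D$ such that the sets $A_{s_1},\dots,A_{s_l}$ are pairwise disjoint. In particular, if $|A^2-\Delta(A)|\le|A-A|^2/M$ for a real $M>0$, then there are at least $M/4$ pairwise disjoint sets $A_{s_1},\dots,A_{s_l}$.
   Context: $\Gamma$ is an abelian group. $A_s=A\cap(A-s)$. $A^2-\Delta(A)=\{(a_1-a,a_2-a):a_1,a_2,a\in A\}\subseteq\Gamma^2$. *)

(* Defs.v *)
From HB Require Import structures.
From mathcomp Require Import all_boot all_order all_algebra.
From mathcomp Require Import finmap.
Set Implicit Arguments. Unset Strict Implicit. Unset Printing Implicit Defensive.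
Import Order.TTheory GRing.Theory Num.Theory.
Local Open Scope ring_scope.
Local Open Scope fset_scope.

Definition diffset (G : zmodType) (A B : {fset G}) : {fset G} :=
  [fset a - b | a in A, b in B].

Definition translate (G : zmodType) (A : {fset G}) (s : G) : {fset G} :=
  [fset a - s | a in A].

Definition Asub (G : zmodType) (A : {fset G}) (s : G) : {fset G} :=
  A `&` translate A s.

(* A^2 - Delta(A) = { (a1 - a, a2 - a) : a1, a2, a in A } in Gamma^2. *)
Definition sqdiag (G : zmodType) (A : {fset G}) : {fset (G * G)} :=
  [fset (p.1 - a, p.2 - a) | p in A `*` A, a in A].

(* Main.v *)
Require Import Defs.
From HB Require Import structures.
From mathcomp Require Import all_boot all_order all_algebra.
From mathcomp Require Import finmap zify ring lra.
Import Order.TTheory GRing.Theory Num.Theory.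
Local Open Scope ring_scope.
Local Open Scope fset_scope.
Set Implicit Arguments. Unset Strict Implicit. Unset Printing Implicit Defensive.

Lemma mem_diffset (G : zmodType) (A B : {fset G}) x :
  reflect (exists a b, [/\ a \in A, b \in B & x = a - b]) (x \in diffset A B).
Proof.
apply: (iffP (imfset2P _ _ _ _ _)).
  by move=> [a aA [b bB ->]]; exists a, b.
by move=> [a [b [aA bB ->]]]; exists a => //; exists b.
Qed.

Lemma mem_translate (G : zmodType) (A : {fset G}) s x :
  (x \in translate A s) = ((x + s)%R \in A).
Proof.
apply/imfsetP/idP => [[a aA ->]|h]; first by rewrite subrK.
by exists ((x + s)%R) => //; rewrite addrK.
Qed.

Lemma mem_Asub (G : zmodType) (A : {fset G}) s x :
  (x \in Asub A s) = (x \in A) && ((x + s)%R \in A).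
Proof. by rewrite /Asub in_fsetI mem_translate. Qed.

Lemma key_conf (G : zmodType) (A : {fset G}) (s t : G) :
  ~~ fdisjoint (Asub A s) (Asub A t) -> t \in diffset A (Asub A s).
Proof.
move=> nd; have [x xs xt] : exists2 x, x \in Asub A s & x \in Asub A t.
  case: (boolP [exists x : Asub A s, val x \in Asub A t]).
    by move=> /existsP [x xt]; exists (val x) => //; apply: valP.
  move=> /existsPn h; exfalso; move: nd; apply/negP/negPn/fdisjointP => a aS.
  by have := h [` aS]; rewrite /=.
apply/mem_diffset; exists ((x + t)%R), x; split => //.
  by move: xt; rewrite mem_Asub => /andP[].
by rewrite [(x + t)%R]addrC addrK.
Qed.

Lemma self_conf (G : zmodType) (A : {fset G}) s :
  s \in diffset A A -> s \in diffset A (Asub A s).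
Proof.
move=> /mem_diffset [a [b [aA bA ->]]]; apply/mem_diffset; exists a, b; split => //.
by rewrite mem_Asub bA /= subrKC.
Qed.

Lemma greedy (T : choiceType) (disj : rel T) (N : T -> {fset T}) (k : nat) :
  forall n (D : {fset T}), (#|` D| <= n)%N ->
  (forall s, s \in D -> s \in N s /\ (#|` N s| <= k)%N) ->
  (forall s t, s \in D -> t \in D -> ~~ disj s t -> t \in N s) ->
  exists q : seq T, [/\ (#|` D| <= size q * k)%N, all (mem D) q & pairwise disj q].
Proof.
elim=> [|n IH] D hD hN hC.
  exists [::]; split => //; by rewrite leqn0 in hD.
case: (boolP (D == fset0)) => [/eqP -> | /fset0Pn [s0 s0D]].
  by exists [::]; split => //; rewrite cardfs0.
have [s0N s0k] := hN s0 s0D.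
set D' := D `\` N s0.
have hI : (#|` D `&` N s0| <= k)%N.
  by apply: leq_trans s0k; apply: fsubset_leq_card; apply: fsubsetIr.
have hI1 : (0 < #|` D `&` N s0|)%N.
  by rewrite cardfs_gt0; apply/fset0Pn; exists s0; rewrite in_fsetI s0D.
have hsplit := cardfsID (N s0) D.
have hD' : (#|` D'| <= n)%N by rewrite /D'; lia.
have sub : forall x, x \in D' -> x \in D by move=> x; rewrite in_fsetD => /andP[].
have [q [h1 h2 h3]] := IH D' hD' (fun s sD => hN s (sub s sD))
   (fun s t sD tD => hC s t (sub s sD) (sub t tD)).
exists (s0 :: q); split.
- rewrite /= mulSn; rewrite -/D' in hsplit; lia.
- rewrite /= s0D /=; apply/allP => x xq; apply: sub.
  by move/allP: h2 => /(_ x xq).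
- rewrite /= h3 andbT; apply/allP => x xq.
  have xD' : x \in D' by move/allP: h2 => /(_ x xq).
  apply/negPn/negP => nd.
  have := hC s0 x s0D (sub x xD') nd.
  by move: xD'; rewrite in_fsetD => /andP[/negP].
Qed.
Lemma part1_nat (G : zmodType) (A D : {fset G}) :
  D `<=` diffset A A ->
  exists q : seq G,
    [/\ (#|` D| ^ 2 <= 4 * size q * \sum_(t <- D) #|` diffset A (Asub A t)|)%N,
        all (mem D) q & pairwise (fun s t => fdisjoint (Asub A s) (Asub A t)) q].
Proof.
move=> DA.
set f := fun t => #|` diffset A (Asub A t)|.
set sig := (\sum_(t <- D) f t)%N.
set n := #|` D|.
case: (posnP n) => [n0|npos].
  by exists [::]; rewrite n0; split.
set k := ((2 * sig) %/ n)%N.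
set D' := [fset t in D | (f t <= k)%N].
set D'' := [fset t in D | ~~ (f t <= k)%N].
have hn : n = (#|` D'| + #|` D''|)%N.
  by rewrite /n !card_fset_sum1 (big_fsetID _ (fun t => (f t <= k)%N)).
have hs : sig = (\sum_(t <- D') f t + \sum_(t <- D'') f t)%N.
  by rewrite /sig (big_fsetID _ (fun t => (f t <= k)%N)).
have h2 : (#|` D''| * k.+1 <= \sum_(t <- D'') f t)%N.
  rewrite card_fset_sum1 big_distrl /= [X in (_ <= X)%N]big_seq [X in (X <= _)%N]big_seq.
  apply: leq_sum => t tD; rewrite mul1n; move: tD; rewrite !inE => /andP[_].
  by rewrite -ltnNge.
have h3 : (2 * sig < k.+1 * n)%N by apply: ltn_ceil.
have h4 : (k * n <= 2 * sig)%N by apply: leq_trunc_div.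
have subD : forall x, x \in D' -> x \in D.
  by move=> x; rewrite !inE => /andP[].
have subk : forall x, x \in D' -> (f x <= k)%N.
  by move=> x; rewrite !inE => /andP[].
have [q [q1 q2 q3]] := @greedy G (fun s t => fdisjoint (Asub A s) (Asub A t))
   (fun s => diffset A (Asub A s)) k _ _ (leqnn #|` D'|)
   (fun s sD => conj (@self_conf G A s (fsubsetP DA s (subD s sD)))
       (subk s sD))
   (fun s t _ _ nd => @key_conf G A s t nd).
exists q; split => //.
- have h5 : (2 * #|` D''| * k.+1 < n * k.+1)%N.
    have : (\sum_(t <- D'') f t <= sig)%N by rewrite hs leq_addl.
    rewrite mulnC in h3; lia.
  rewrite ltn_pmul2r // in h5.
  have h6 : (n <= 2 * (size q * k))%N by lia.
  have h7 : (n * n <= 2 * (size q * k) * n)%N by rewrite leq_mul2r h6 orbT.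
  have h8 : (2 * (size q * k) * n <= 2 * size q * (2 * sig))%N.
    have -> : (2 * (size q * k) * n = 2 * size q * (k * n))%N by rewrite !mulnA.
    exact: leq_mul (leqnn _) h4.
  rewrite expnS expn1; apply: leq_trans h7 (leq_trans h8 _).
  by rewrite mulnA (mulnAC 2 (size q) 2).
- apply/allP => x xq; apply: subD; exact: (allP q2).
Qed.
Lemma enum_mem_fset (T : choiceType) (X : {fset T}) (F : T -> nat) :
  (\sum_(i <- enum_finmem (mem X)) F i = \sum_(i <- X) F i)%N.
Proof.
apply: perm_big; apply: uniq_perm; first exact: enum_finmem_uniq.
  exact: fset_uniq.
by move=> x; rewrite enum_finmemE.
Qed.

Lemma sig_le (G : zmodType) (A : {fset G}) :
  (\sum_(t <- diffset A A) #|` diffset A (Asub A t)| <= #|` sqdiag A|)%N.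
Proof.
set P := [fset ((u, t) : G * G) | t : G in diffset A A, u : G in diffset A (Asub A t)].
have -> : (\sum_(t <- diffset A A) #|` diffset A (Asub A t)| = #|` P|)%N.
  rewrite card_fset_sum1 [X in _ = X]big_imfset2 /=; last first.
    by move=> [x1 y1] [x2 y2] _ _ /= [-> ->].
  rewrite enum_mem_fset; apply: eq_bigr => t _.
  by rewrite enum_mem_fset card_fset_sum1.
apply: fsubset_leq_card; apply/fsubsetP => p /imfset2P [t tD [u uS ->]].
move/mem_diffset: uS => [a [x [aA xS ->]]].
rewrite mem_Asub in xS; case/andP: xS => xA xtA.
apply/imfset2P; exists (a, (x + t)%R).
  by rewrite !inE /= aA xtA.
exists x => //=.
by rewrite [(x + t)%R]addrC addrK.
Qed.
Lemma disj_nth (G : zmodType) (A : {fset G}) (q : seq G) :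
  pairwise (fun s t => fdisjoint (Asub A s) (Asub A t)) q ->
  forall i j : 'I_(size q), i != j ->
   [disjoint Asub A (nth 0%R q i) & Asub A (nth 0%R q j)].
Proof.
move=> /(pairwiseP 0%R) h i j; rewrite neq_ltn => /orP[ij|ji].
  by apply: h => //; rewrite inE /=.
by rewrite fdisjoint_sym; apply: h => //; rewrite inE /=.
Qed.

Theorem proposition8 (R : realFieldType) (G : zmodType) (A D : {fset G}) :
  D `<=` diffset A A ->
  (exists (l : nat) (s : 'I_l -> G),
      (#|` D|%:R ^+ 2 / (4 * (\sum_(t <- D) #|` diffset A (Asub A t)|)%N%:R)
         <= (l%:R : R))
      /\ (forall i, s i \in D)
      /\ (forall i j, i != j -> [disjoint Asub A (s i) & Asub A (s j)]))
  /\
  (A != fset0 -> forall M : R, 0 < M ->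
     (#|` sqdiag A|%:R <= #|` diffset A A|%:R ^+ 2 / M) ->
     exists (l : nat) (s : 'I_l -> G),
       M / 4 <= l%:R
       /\ (forall i, s i \in diffset A A)
       /\ (forall i j, i != j -> [disjoint Asub A (s i) & Asub A (s j)])).
Proof.
move=> DA; split.
  have [q [q1 q2 q3]] := @part1_nat G A D DA.
  exists (size q), (fun i => nth 0%R q i); split; last split.
  - set sig := (\sum_(t <- D) _)%N in q1 *.
    case: (posnP sig) => [->|sp].
      by rewrite mulr0 invr0 mulr0 ler0n.
    rewrite ler_pdivrMr; last by rewrite mulr_gt0 // ltr0n.
    have : ((#|` D| ^ 2)%:R <= (4 * size q * sig)%N%:R :> R) by rewrite ler_nat.
    rewrite natrX !natrM => h; apply: (le_trans h); rewrite le_eqVlt; apply/orP; left; apply/eqP; ring.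
  - by move=> i; apply: (allP q2); apply: mem_nth.
  - exact: disj_nth.
move=> A0 M M0 hM.
have [q [q1 q2 q3]] := @part1_nat G A _ (fsubset_refl (diffset A A)).
exists (size q), (fun i => nth 0%R q i); split; last split.
- set sig := (\sum_(t <- diffset A A) _)%N in q1.
  have hS := @sig_le G A; rewrite -/sig in hS.
  set n := #|` diffset A A| in q1 hM.
  have npos : (0 < n)%N.
    case/fset0Pn: A0 => a aA; rewrite cardfs_gt0; apply/fset0Pn; exists (a - a)%R.
    by apply/mem_diffset; exists a, a.
  have sp : (0 < sig)%N.
    case: (posnP sig) => // s0; rewrite s0 muln0 in q1.
    by move: q1; rewrite leqn0 expn_eq0 andbT => /eqP n0; rewrite n0 in npos.
  rewrite ler_pdivlMr // in hM.
  have hq : ((n ^ 2)%:R <= (4 * size q * sig)%N%:R :> R) by rewrite ler_nat.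
  rewrite natrX !natrM in hq.
  have hS' : (sig%:R <= #|` sqdiag A|%:R :> R) by rewrite ler_nat.
  have sR : (0 < sig%:R :> R) by rewrite ltr0n.
  have : sig%:R * M <= sig%:R * (4 * (size q)%:R) :> R by nra.
  rewrite ler_pM2l // => hh; lra.
- by move=> i; apply: (allP q2); apply: mem_nth.
- exact: disj_nth.
Qed.
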